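(* Let $\mathbf n=(n_1,\dots,n_k)$ with $n_i\ge0$ integers and $\sum n_i=n$. For every $m\ge0$, as rational functions of $q^{-2}$ and indeterminates $\mu_1,\dots,\mu_k$, $$\vartheta_m(\mathbf n,q^{-2},\mu)=\sum_{j=1}^kC_j(\mathbf n,q^{-2},\mu)\mu_j^m,$$ where $$C_j(\mathbf n,q^{-2},\mu)=\hat n_j+\hat n_j\sum_{\ell=1}^{k-1}(1-q^{-2})^\ell\sum_{\substack{1\le i_1<\dots<i_\ell\le k\\ i_1,\dots,i_\ell\neq j}}\frac{\hat n_{i_1}\mu_{i_1}}{\mu_j-\mu_{i_1}}\cdots\frac{\hat n_{i_\ell}\mu_{i_\ell}}{\mu_j-\mu_{i_\ell}}.$$
   Context: $\hat m=\frac{1-q^{-2m}}{1-q^{-2}}$ for $m\in\mathbb Z$. For $m\ge1$, $\vartheta_m(\mathbf n,q^{-2},\mu)=\sum_{\ell=1}^k(1-q^{-2})^{\ell-1}\sum_{\mathbf d}\sum_{1\le i_1<\dots<i_\ell\le k}\hat n_{i_1}\cdots\hat n_{i_\ell}\mu_{i_1}^{d_1}\cdots\mu_{i_\ell}^{d_\ell}$, where $\mathbf d=(d_1,\dots,d_\ell)$ runs over $\ell$-tuples of positive integers with $d_1+\dots+d_\ell=m$; and $\vartheta_0(\mathbf n,q^{-2},\mu)=\hat n$. *)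

(* Defs.v *)
From mathcomp Require Import all_boot all_order all_algebra.
Set Implicit Arguments. Unset Strict Implicit. Unset Printing Implicit Defensive.
Import Order.TTheory GRing.Theory Num.Theory.
Local Open Scope ring_scope.

Section Defs.
Variable F : fieldType.

(* \hat m = (1 - t^m)/(1 - t), t playing the role of q^{-2}. *)
Definition qhat (t : F) (m : nat) : F := (1 - t ^+ m) / (1 - t).

Definition incr_idx (l k : nat) (i : {ffun 'I_l -> 'I_k}) : bool :=
  [forall a : 'I_l, forall b : 'I_l, (a < b)%N ==> (i a < i b)%N].

(* compositions d = (d_1,...,d_l) of m into l positive parts
   (each d_a <= m, so 'I_m.+1 is large enough) *)
Definition composition (l m : nat) (d : {ffun 'I_l -> 'I_m.+1}) : bool :=
  [forall a : 'I_l, (0 < d a)%N] && ((\sum_(a < l) (d a : nat))%N == m).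

Definition vartheta (k : nat) (n : 'I_k -> nat) (t : F) (mu : 'I_k -> F)
    (m : nat) : F :=
  if m is 0%N then qhat t (\sum_(i < k) n i)%N
  else \sum_(1 <= l < k.+1)
         (1 - t) ^+ l.-1 *
         \sum_(d : {ffun 'I_l -> 'I_m.+1} | composition d)
           \sum_(i : {ffun 'I_l -> 'I_k} | incr_idx i)
             \prod_(a < l) (qhat t (n (i a)) * mu (i a) ^+ (d a)).

Definition Ccoef (k : nat) (n : 'I_k -> nat) (t : F) (mu : 'I_k -> F)
    (j : 'I_k) : F :=
  qhat t (n j) + qhat t (n j) *
    \sum_(1 <= l < k)
      (1 - t) ^+ l *
      \sum_(i : {ffun 'I_l -> 'I_k} | incr_idx i && [forall a, i a != j])
        \prod_(a < l) (qhat t (n (i a)) * mu (i a) / (mu j - mu (i a))).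

End Defs.

(* Main.v *)
Require Import Defs.
From mathcomp Require Import all_boot all_order all_algebra.
From mathcomp.algebra_tactics Require Import ring.
Import GRing.Theory.
Local Open Scope ring_scope.
Set Implicit Arguments. Unset Strict Implicit. Unset Printing Implicit Defensive.
Import Order.TTheory Num.Theory.

Section Main.
Variable F : fieldType.
Variable k : nat.
Variable mu : 'I_k -> F.
Hypothesis muI : injective mu.

Definition rr (j i : 'I_k) := mu i / (mu j - mu i).
Definition Pf (S : {set 'I_k}) (m : nat) :=
  \sum_(j in S) mu j ^+ m * \prod_(i in S :\ j) rr j i.

Lemma mu_neq (i j : 'I_k) : i != j -> mu j - mu i != 0.
Proof. by move=> ij; rewrite subr_eq0 (inj_eq muI) eq_sym. Qed.

Lemma PfC (S : {set 'I_k}) : S != set0 -> Pf S 0 = (-1) ^+ (#|S|.-1).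
Proof.
move=> S0.
pose q : {poly F} := \sum_(j in S) \prod_(i in S :\ j) ((mu j - mu i)^-1 *: ('X - (mu i)%:P)) - 1.
have Hroot b : b \in S -> q.[mu b] = 0.
  move=> bS; rewrite /q hornerD hornerN hornerC horner_sum (bigD1 b) //= horner_prod.
  rewrite big1 ?add0r; last first.
    move=> i; rewrite in_setD1 => /andP[ib _].
    by rewrite hornerZ hornerXsubC mulVf // mu_neq.
  rewrite big1 ?addr0 ?subrr // => j /andP [jS jb].
  rewrite horner_prod (bigD1 b) /=; last by rewrite in_setD1 eq_sym jb.
  by rewrite hornerZ hornerXsubC subrr mulr0 mul0r.
have Hsize : (size q <= #|S|)%N.
  rewrite /q; apply: leq_trans (size_add _ _) _; rewrite geq_max; apply/andP; split.
    apply: (big_ind (fun p : {poly F} => size p <= #|S|)%N); first by rewrite size_poly0.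
      by move=> p1 p2 h1 h2; apply: leq_trans (size_add _ _) _; rewrite geq_max h1.
    move=> j jS; rewrite scaler_prod; apply: leq_trans (size_scale_leq _ _) _.
    rewrite -big_enum size_prod_XsubC -cardE (cardsD1 j S) jS //.
  by rewrite size_opp size_poly1 card_gt0.
have q0 : q = 0.
  apply/eqP; apply: contraT => nz.
  have := max_poly_roots nz (rs := [seq mu b | b <- enum S]).
  rewrite size_map -cardE ltnNge Hsize /=; apply.
    by apply/allP => z /mapP [b]; rewrite mem_enum => bS ->; rewrite /root Hroot.
  by rewrite map_inj_uniq // enum_uniq.
have := congr1 (fun p => p.[0]) q0; rewrite /q horner0 hornerD hornerN hornerC horner_sum.
move/eqP; rewrite subr_eq0 => /eqP H1.
have -> : (-1) ^+ (#|S|.-1) = (-1) ^+ (#|S|.-1) * \sum_(j in S)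
   (\prod_(i in S :\ j) ((mu j - mu i)^-1 *: ('X - (mu i)%:P))).[0] :> F.
  by rewrite H1 mulr1.
rewrite mulr_sumr; apply: eq_bigr => j jS.
rewrite expr0 mul1r horner_prod.
rewrite [in RHS](eq_bigr (fun i => -1 * rr j i)); last first.
  by move=> i _; rewrite hornerZ hornerXsubC /rr sub0r mulN1r mulrC mulNr.
rewrite [in RHS]big_split /= prodr_const (cardsD1 j S) jS /=.
by rewrite signrMK.
Qed.

Lemma Pf_rec (y : 'I_k) (T : {set 'I_k}) i : y \notin T ->
  Pf (y |: T) i.+1 = mu y * (Pf (y |: T) i + Pf T i).
Proof.
move=> yT; rewrite /Pf !big_setU1 //= !setU1K //.
have E j : j \in T -> (y |: T) :\ j = y |: (T :\ j).
  by move=> jT; rewrite setDUl (setDidPl _) // disjoint_sym disjoints1 in_set1;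
     apply: contra yT => /eqP <-.
have G i' : \sum_(j in T) mu j ^+ i' * \prod_(u in (y |: T) :\ j) rr j u =
    \sum_(j in T) mu j ^+ i' * (rr j y * \prod_(u in T :\ j) rr j u).
  apply: eq_bigr => j jT.
  by rewrite (E j jT) big_setU1 // in_setD1 (negbTE yT) andbF.
rewrite !G.
rewrite -addrA -big_split /= mulrDr mulr_sumr exprS mulrA; congr (_ + _).
apply: eq_bigr => j jT.
have d0 : mu j - mu y != 0 by apply: mu_neq; apply: contra yT => /eqP ->.
rewrite /rr exprS; field.
done.
Qed.

Definition Qp (v : F) (M : nat) : {poly F} :=
  \poly_(e < M.+1) (if (0 < e)%N then v ^+ e else 0).

Definition H (S : {set 'I_k}) M i := (\prod_(u in S) Qp (mu u) M)`_i.

Lemma Qp_rec v M :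
  Qp v M = v *: ('X * (1 + Qp v M)) - (v ^+ M.+1) *: 'X^(M.+1).
Proof.
apply/polyP => i; rewrite coefB !coefZ coefXM coefXn /Qp !coef_poly.
case: i => [|i] /=; first by rewrite !mulr0 subr0.
rewrite coefD coef1 coef_poly ltnS.
case: i => [|i] /=.
  by case: M => [|M] /=; rewrite ?addr0 ?mulr1 ?mulr0 ?subr0 ?expr1 ?subrr.
rewrite add0r ltnS -[i.+2 == M.+1]/(i.+1 == M); case: (ltngtP i.+1 M) => h.
- by rewrite mulr0 subr0 exprS.
- by rewrite !mulr0 subr0.
- by rewrite mulr1 -exprS h subrr.
Qed.

Lemma H_rec (y : 'I_k) (T : {set 'I_k}) M i : y \notin T -> (i < M)%N ->
  H (y |: T) M i.+1 = mu y * (H (y |: T) M i + H T M i).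
Proof.
move=> yT iM; rewrite /H big_setU1 //=.
set R := \prod_(u in T) _.
have E : Qp (mu y) M * R = (mu y *: ('X * (1 + Qp (mu y) M)) - (mu y ^+ M.+1) *: 'X^(M.+1)) * R.
  by rewrite -Qp_rec.
rewrite [in LHS]E mulrBl coefB -!scalerAl !coefZ -mulrA coefXM /= coefXnM ltnS iM mulr0 subr0.
by rewrite mulrDl mul1r coefD addrC.
Qed.

Lemma H0 S M : S != set0 -> H S M 0 = 0.
Proof.
case/set0Pn => y yS; rewrite /H coef0_prod (bigD1 y) //=.
by rewrite /Qp coef_poly /= mul0r.
Qed.

Lemma H1 y M i : (0 < i <= M)%N -> H [set y] M i = mu y ^+ i.
Proof. by case/andP => i0 iM; rewrite /H big_set1 /Qp coef_poly ltnS iM i0. Qed.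

Lemma HP N M : forall S : {set 'I_k}, #|S| = N.+1 -> forall i, (0 < i <= M)%N -> H S M i = Pf S i.
Proof.
elim: N => [|N IH] S cS i iM.
  move/eqP/cards1P: cS => [y Sy]; rewrite Sy H1 // /Pf big_set1 setDv big_set0 mulr1 //.
have [y yS] : exists y, y \in S.
  by apply/set0Pn; rewrite -card_gt0 cS.
set T := S :\ y.
have yT : y \notin T by rewrite in_setD1 eqxx.
have cT : #|T| = N.+1 by move: cS; rewrite (cardsD1 y S) yS => -[].
have ST : S = y |: T by rewrite setD1K.
have T0 : T != set0 by rewrite -card_gt0 cT.
case: i iM => // i /= iM.
elim: i iM => [|i IHi] iM.
  rewrite ST H_rec // ?H0 ?addr0 ?mulr0; last by rewrite -ST -card_gt0 cS.
    rewrite Pf_rec // !PfC // ?cardsU1 ?yT ?cT /=; last by rewrite -ST -card_gt0 cS.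
    by rewrite exprS mulN1r addNr mulr0.
  by [].
have iM' : (0 < i.+1 <= M)%N by rewrite /= ltnW.
rewrite ST H_rec // -ST (IHi (ltnW iM)) (IH T cT i.+1 iM').
by rewrite ST [RHS]Pf_rec.
Qed.

Lemma comp_coef l m (nu : 'I_l -> F) :
  \sum_(d : {ffun 'I_l -> 'I_m.+1} | composition d) \prod_(a < l) nu a ^+ d a
  = (\prod_(a < l) Qp (nu a) m)`_m.
Proof.
rewrite [in RHS](eq_bigr (fun a => \sum_(e < m.+1)
   (if (0 < e)%N then nu a ^+ e else 0) *: 'X^e)); last by move=> a _; rewrite /Qp poly_def.
rewrite bigA_distr_bigA /= coef_sum big_mkcond /=; apply: eq_bigr => d _.
rewrite scaler_prod prodrXr coefZ coefXn /composition.
case: (boolP [forall a, 0 < d a]%N) => [/forallP pos | /forallPn [a a0]] /=.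
  rewrite [in RHS](eq_bigr (fun a => nu a ^+ d a)) => [|a _]; last by rewrite pos.
  by rewrite eq_sym; case: eqP; rewrite ?mulr1 ?mulr0.
by rewrite (bigD1 a) //= (negbTE a0) !mul0r.
Qed.

Definition ltI n : rel 'I_n := relpre val ltn.

Lemma ltI_trans n : transitive (@ltI n).
Proof. by move=> a b c; apply: ltn_trans. Qed.

Lemma ltI_irr n : irreflexive (@ltI n).
Proof. by move=> a; apply: ltnn. Qed.

Lemma sorted_enum_ord n : sorted (@ltI n) (enum 'I_n).
Proof. by rewrite -sorted_map val_enum_ord iota_ltn_sorted. Qed.

Lemma sorted_enumS n (S : {set 'I_n}) : sorted (@ltI n) (enum S).
Proof.
rewrite -deprecated_filter_index_enum; apply: sorted_filter; first exact: ltI_trans.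
by rewrite -[index_enum _]filter_predT deprecated_filter_index_enum; apply: sorted_enum_ord.
Qed.

Section SetConv.
Variable l : nat.
Variable x0 : 'I_k.

Definition hI (i : {ffun 'I_l -> 'I_k}) : {set 'I_k} := [set i a | a : 'I_l].
Definition hS (S : {set 'I_k}) : {ffun 'I_l -> 'I_k} := [ffun a : 'I_l => nth x0 (enum S) a].

Lemma incr_inj (i : {ffun 'I_l -> 'I_k}) : incr_idx i -> injective i.
Proof.
move=> /forallP inc a b e; case: (ltngtP a b) => h.
- by have := implyP (forallP (inc a) b) h; rewrite e ltnn.
- by have := implyP (forallP (inc b) a) h; rewrite e ltnn.
- exact: val_inj.
Qed.

Lemma incr_enum (i : {ffun 'I_l -> 'I_k}) : incr_idx i -> enum (hI i) = [seq i a | a <- enum 'I_l].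
Proof.
move=> inc; apply: (irr_sorted_eq (@ltI_trans k) (@ltI_irr k)).
- exact: sorted_enumS.
- apply: (homo_sorted (e := @ltI l)); last exact: sorted_enum_ord.
  by move=> a b ab; move/forallP: inc => /(_ a) /forallP /(_ b) /implyP; apply.
- move=> x; rewrite mem_enum; apply/imsetP/mapP => -[a _ ->]; exists a => //.
  by rewrite mem_enum.
Qed.

Lemma hSI (i : {ffun 'I_l -> 'I_k}) : incr_idx i -> hS (hI i) = i.
Proof.
move=> inc; apply/ffunP => a; rewrite ffunE incr_enum //.
by rewrite (nth_map a) ?size_enum_ord // nth_ord_enum.
Qed.

Lemma card_hI (i : {ffun 'I_l -> 'I_k}) : incr_idx i -> #|hI i| = l.
Proof. by move=> inc; rewrite card_imset ?card_ord //; apply: incr_inj. Qed.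

Lemma hS_incr (S : {set 'I_k}) : #|S| = l -> incr_idx (hS S).
Proof.
move=> cS; apply/forallP => a; apply/forallP => b; apply/implyP => ab; rewrite !ffunE.
apply: (sorted_ltn_nth (@ltI_trans k) x0 (sorted_enumS S)) => //;
  by rewrite inE -cardE cS ltn_ord.
Qed.

Lemma hIS (S : {set 'I_k}) : #|S| = l -> hI (hS S) = S.
Proof.
move=> cS; apply/setP => x; apply/imsetP/idP.
  by move=> [a _ ->]; rewrite ffunE -mem_enum mem_nth // -cardE cS ltn_ord.
rewrite -mem_enum => xS.
have il : (index x (enum S) < l)%N by rewrite -cS cardE index_mem.
by exists (Ordinal il) => //; rewrite ffunE nth_index.
Qed.

Lemma set_conv (P : pred {set 'I_k}) (G : {set 'I_k} -> F) :
  \sum_(i : {ffun 'I_l -> 'I_k} | incr_idx i && P (hI i)) G (hI i)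
  = \sum_(S : {set 'I_k} | (#|S| == l) && P S) G S.
Proof.
rewrite [RHS](reindex_onto hI hS); last by move=> S /andP [/eqP cS _]; apply: hIS.
apply: eq_bigl => i; case: (boolP (incr_idx i)) => inc.
  by rewrite card_hI // hSI // !eqxx andbT.
apply/esym/negbTE; apply: contra inc => /andP [/andP [/eqP c _] /eqP e].
by rewrite -e; apply: hS_incr.
Qed.

End SetConv.


Lemma sum_card (K : nat) (Q : pred {set 'I_k}) (g : {set 'I_k} -> F) :
  (forall S, Q S -> #|S| < K)%N ->
  \sum_(1 <= l < K) \sum_(S : {set 'I_k} | (#|S| == l) && Q S) g S
  = \sum_(S : {set 'I_k} | (S != set0) && Q S) g S.
Proof.
move=> hQ.
rewrite (eq_bigr (fun l => \sum_(S : {set 'I_k}) (if (#|S| == l) && Q S then g S else 0))) => [|l _];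
  last by rewrite big_mkcond.
rewrite exchange_big [RHS]big_mkcond; apply: eq_bigr => S _ /=.
case: (boolP (Q S)) => QS; last by rewrite andbF big1 // => l _; rewrite andbF.
rewrite andbT -card_gt0.
case: (posnP #|S|) => c0.
  rewrite big1_seq // => l /andP [_]; rewrite mem_index_iota c0.
  by case: l.
rewrite (big_rem #|S|) /=; last by rewrite mem_index_iota c0 hQ.
rewrite eqxx big1_seq ?addr0 // => l /andP [_]; rewrite mem_rem_uniq ?iota_uniq //.
by rewrite inE eq_sym => /andP [/negbTE ->].
Qed.

Lemma sum_split (sc : F) (a : 'I_k -> F) (b : 'I_k -> 'I_k -> F) :
  \sum_(S : {set 'I_k} | S != set0) sc ^+ #|S|.-1 * \sum_(j in S) a j * \prod_(u in S :\ j) b j u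
  = \sum_(j : 'I_k) a j * \sum_(T : {set 'I_k} | j \notin T) sc ^+ #|T| * \prod_(u in T) b j u.
Proof.
have -> : \sum_(S : {set 'I_k} | S != set0) sc ^+ #|S|.-1 * \sum_(j in S) a j * \prod_(u in S :\ j) b j u
   = \sum_(S : {set 'I_k}) \sum_(j in S) sc ^+ #|S|.-1 * (a j * \prod_(u in S :\ j) b j u).
  rewrite [RHS](bigD1 set0) //= big_set0 add0r; apply: eq_bigr => S _; by rewrite mulr_sumr.
rewrite (exchange_big_dep predT) //=; apply: eq_bigr => j _.
rewrite mulr_sumr (reindex_onto (fun T => j |: T) (fun S => S :\ j)) /=;
  last by move=> S jS; rewrite setD1K.
apply: eq_big => [T | T /andP [_ /eqP e]].
  rewrite setU11 /=; case: (boolP (j \in T)) => jT.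
    by apply/negbTE/eqP => h; move: jT; rewrite -h in_setD1 eqxx.
  by rewrite setU1K // eqxx.
have jT : j \notin T by rewrite -e in_setD1 eqxx.
by rewrite e cardsU1 jT /= mulrCA.
Qed.

Lemma sum_sets (y : 'I_k -> F) :
  \sum_(S : {set 'I_k}) \prod_(u in S) y u = \prod_(u : 'I_k) (1 + y u).
Proof.
rewrite (eq_bigr (fun u => \sum_(b : bool) (if b then y u else 1))); last first.
  by move=> u _; rewrite big_bool /= addrC.
rewrite bigA_distr_bigA /=.
rewrite (reindex (fun f : {ffun 'I_k -> bool} => [set u | f u])) /=; last first.
  exists (fun S : {set 'I_k} => [ffun u => u \in S]) => f _.
    by apply/ffunP => u; rewrite ffunE inE.
  by apply/setP => u; rewrite inE ffunE.
apply: eq_bigr => f _; rewrite big_mkcond; apply: eq_bigr => u _.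
by rewrite inE.
Qed.

End Main.

Section Final.
Variable F : fieldType.
Variable k : nat.
Variable n : 'I_k -> nat.
Variable t : F.
Variable mu : 'I_k -> F.
Hypothesis ht : t != 1.
Hypothesis muI : injective mu.

Local Notation xh u := (qhat t (n u)).
Local Notation s := (1 - t).

Lemma theta_sets m : (0 < m)%N -> vartheta n t mu m =
  \sum_(S : {set 'I_k} | S != set0) s ^+ #|S|.-1 * ((\prod_(u in S) xh u) * Pf mu S m).
Proof.
case: m => // m _; rewrite /vartheta.
rewrite (eq_bigl (fun S : {set 'I_k} => (S != set0) && predT S)); last by move=> S; rewrite andbT.
rewrite -(sum_card (K := k.+1)); last by move=> S _; rewrite ltnS; apply: leq_trans (max_card _) _; rewrite card_ord.
apply: eq_big_nat => l /andP [l1 lk].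
have k0 : (0 < k)%N by apply: leq_trans l1 _; rewrite -ltnS.
have x0 : 'I_k := Ordinal k0.
rewrite exchange_big /=.
rewrite (eq_bigl (fun i : {ffun 'I_l -> 'I_k} => incr_idx i && predT (hI i))); last first.
  by move=> i; rewrite andbT.
rewrite (eq_bigr (fun i => (\prod_(u in hI i) xh u) * H mu (hI i) m.+1 m.+1)); last first.
  move=> i /andP [inc _].
  rewrite (eq_bigr (fun d : {ffun 'I_l -> 'I_m.+2} => (\prod_(a < l) xh (i a)) * \prod_(a < l) mu (i a) ^+ d a));
    last by move=> d _; rewrite big_split.
  rewrite -mulr_sumr (comp_coef m.+1 (fun a => mu (i a))) /H /hI !big_imset //=;
    by move=> a b _ _; apply: incr_inj.
rewrite (set_conv l x0 predT (fun S => (\prod_(u in S) xh u) * H mu S m.+1 m.+1)) mulr_sumr; apply: eq_bigr => S /andP [/eqP cS _].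
rewrite cS (HP muI (N := l.-1)) ?prednK //.
by rewrite /= leqnn.
Qed.

Lemma C_sets j : Ccoef n t mu j =
  xh j * \sum_(T : {set 'I_k} | j \notin T) s ^+ #|T| * \prod_(u in T) (xh u * rr mu j u).
Proof.
rewrite /Ccoef.
have k0 : (0 < k)%N by apply: leq_ltn_trans (ltn_ord j).
have E : forall l, (1 <= l < k)%N ->
  (1 - t) ^+ l * \sum_(i : {ffun 'I_l -> 'I_k} | incr_idx i && [forall a, i a != j])
        \prod_(a < l) (qhat t (n (i a)) * mu (i a) / (mu j - mu (i a)))
  = \sum_(S : {set 'I_k} | (#|S| == l) && (j \notin S))
      s ^+ #|S| * \prod_(u in S) (xh u * rr mu j u).
  move=> l _.
  rewrite (eq_bigl (fun i : {ffun 'I_l -> 'I_k} => incr_idx i && (j \notin hI i))); last first.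
    move=> i; congr (_ && _); apply/forallP/idP => [h | h a].
      by apply/imsetP => -[a _ e]; have := h a; rewrite e eqxx.
    by apply: contra h => /eqP <-; apply/imsetP; exists a.
  rewrite (eq_bigr (fun i => \prod_(u in hI i) (xh u * rr mu j u))); last first.
    move=> i /andP [inc _]; rewrite /hI big_imset /=; last by move=> a b _ _; apply: incr_inj.
    by apply: eq_bigr => a _; rewrite /rr mulrA.
  rewrite (set_conv l j (fun S => j \notin S) (fun S => \prod_(u in S) (xh u * rr mu j u))) mulr_sumr; apply: eq_bigr => T /andP [/eqP cT _].
  by rewrite cT.
rewrite (eq_big_nat _ _ E) sum_card; last first.
  move=> T jT; apply: leq_ltn_trans (_ : #|T| <= #|[set~ j]|)%N _.
    by apply: subset_leq_card; apply/subsetP => u uT; rewrite !inE; apply: contra jT => /eqP <-.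
  by rewrite cardsC1 card_ord prednK.
rewrite [in RHS](bigD1 set0) /=; last by rewrite in_set0.
rewrite cards0 expr0 big_set0 mulr1 mulrDr mulr1; congr (_ + _); congr (_ * _).
by apply: eq_bigl => T; rewrite andbC.
Qed.

Lemma rhs_sets m : \sum_(j < k) Ccoef n t mu j * mu j ^+ m =
  \sum_(S : {set 'I_k} | S != set0) s ^+ #|S|.-1 * ((\prod_(u in S) xh u) * Pf mu S m).
Proof.
rewrite (eq_bigr (fun S : {set 'I_k} => s ^+ #|S|.-1 * \sum_(j in S) (xh j * mu j ^+ m) *
     \prod_(u in S :\ j) (xh u * rr mu j u))); last first.
  move=> S _; congr (_ * _); rewrite /Pf mulr_sumr; apply: eq_bigr => j jS.
  rewrite (big_setD1 j jS) /=.
  set A := \prod_(u in S :\ j) xh u; set B := \prod_(u in S :\ j) rr mu j u.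
  set x := xh j; set y := mu j ^+ m.
  rewrite [in RHS]big_split /= -/A -/B.
  by rewrite mulrACA.
rewrite sum_split; apply: eq_bigr => j _.
by rewrite C_sets mulrAC.
Qed.

Lemma zero_case : qhat t (\sum_(i < k) n i) =
  \sum_(S : {set 'I_k} | S != set0) s ^+ #|S|.-1 * ((\prod_(u in S) xh u) * Pf mu S 0).
Proof.
have s0 : s != 0 by rewrite subr_eq0 eq_sym.
rewrite (eq_bigr (fun S : {set 'I_k} => s ^+ #|S|.-1 * ((\prod_(u in S) xh u) * (-1) ^+ #|S|.-1)));
  last by move=> S S0; rewrite PfC.
apply: (mulfI s0).
have xs u : s * xh u = 1 - t ^+ n u by rewrite /qhat mulrC divfK.
transitivity (1 - t ^+ (\sum_(i < k) n i)); first by rewrite /qhat mulrC divfK.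
rewrite -prodrXr [in LHS](eq_bigr (fun u => 1 + - (s * xh u))); last first.
  by move=> u _; rewrite xs opprB addrC subrK.
rewrite -sum_sets (bigD1 set0) //= big_set0.
rewrite opprD addrA subrr add0r mulr_sumr -sumrN; apply: eq_bigr => S S0.
rewrite [in LHS](eq_bigr (fun u => (- s) * xh u)); last by move=> u _; rewrite mulNr.
rewrite big_split /= prodr_const.
have c0 : #|S| = (#|S|.-1).+1 by rewrite prednK // card_gt0.
rewrite [in LHS]c0 exprS [in LHS]exprNn.
ring.
Qed.

End Final.

Theorem proposition4p3 (F : fieldType) (k : nat) (n : 'I_k -> nat)
    (t : F) (mu : 'I_k -> F) :
  t != 1 -> injective mu ->
  forall m : nat,
    vartheta n t mu m = \sum_(j < k) Ccoef n t mu j * mu j ^+ m.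
Proof.
move=> ht muI [|m].
  by rewrite rhs_sets /= (zero_case _ ht muI).
by rewrite (theta_sets _ _ muI) // rhs_sets.
Qed.
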